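(* Let $\alpha\in(0,1)$ and let $0=t_0<t_1<t_2<\cdots$ be time levels with $\tau_k=t_k-t_{k-1}$, $r_k:=\tau_k/\tau_{k-1}$ ($k\ge2$), such that $r_k<r^*(\alpha)$ for all $k\ge2$. For a real sequence $(v^k)_{k\ge0}$ and $n\ge2$ set $$J^n_{B2}:=\Big(\frac{1}{2-\alpha}a^{(n)}_0+\frac{r_n\eta^{(n)}_0}{1+r_n}\Big)\nabla_\tau v^n-\frac{r_n^2\eta^{(n)}_0}{1+r_n}\nabla_\tau v^{n-1}.$$ Then for $n\ge2$, $$(\nabla_\tau v^n)J^n_{B2}\ge\frac{\alpha r_{n+1}^{2-\alpha/2}}{2(1+r_{n+1})\tau_n^\alpha}\frac{(\nabla_\tau v^n)^2}{\Gamma(3-\alpha)}-\frac{\alpha r_n^{2-\alpha/2}}{2(1+r_n)\tau_{n-1}^\alpha}\frac{(\nabla_\tau v^{n-1})^2}{\Gamma(3-\alpha)}+\frac{\mathrm{g}(r_n,r_{n+1},\alpha)}{2\Gamma(3-\alpha)\tau_n^\alpha}(\nabla_\tau v^n)^2.$$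
   Context: $\nabla_\tau v^k:=v^k-v^{k-1}$; $\omega_\beta(t):=t^{\beta-1}/\Gamma(\beta)$; $a^{(n)}_0:=\frac1{\tau_n}\int_{t_{n-1}}^{t_n}\omega_{1-\alpha}(t_n-s)\,ds$ and $\eta^{(n)}_0:=\frac{2}{\tau_n}\int_{t_{n-1}}^{t_n}\frac{s-t_{n-1/2}}{\tau_n}\omega_{1-\alpha}(t_n-s)\,ds$ with $t_{n-1/2}=(t_n+t_{n-1})/2$. $\mathrm{g}(x,y,\alpha):=\frac{2+2(1+\alpha)x-\alpha x^{2-\alpha/2}}{1+x}-\frac{\alpha y^{2-\alpha/2}}{1+y}$; $r^*(\alpha)$ is the unique positive root $z$ of $1/\alpha+(1+1/\alpha)z-z^{2-\alpha/2}=0$. *)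

(* Defs.v *)
From Stdlib Require Import Reals ClassicalEpsilon.
From Coquelicot Require Import Coquelicot.
Open Scope R_scope.

Definition Gamma (x : R) : R :=
  RInt_gen (fun t => Rpower t (x - 1) * exp (- t)) (at_right 0) (Rbar_locally p_infty).

Definition omega (beta t : R) : R := Rpower t (beta - 1) / Gamma beta.

Definition nabla (v : nat -> R) (k : nat) : R := v k - v (k - 1)%nat.

Definition tau (t : nat -> R) (k : nat) : R := t k - t (k - 1)%nat.
Definition ratio (t : nat -> R) (k : nat) : R := tau t k / tau t (k - 1)%nat.

Definition a0 (alpha : R) (t : nat -> R) (n : nat) : R :=
  / tau t n * RInt_gen (fun s => omega (1 - alpha) (t n - s))
                (at_point (t (n - 1)%nat)) (at_left (t n)).

Definition eta0 (alpha : R) (t : nat -> R) (n : nat) : R :=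
  2 / tau t n * RInt_gen
    (fun s => (s - (t n + t (n - 1)%nat) / 2) / tau t n * omega (1 - alpha) (t n - s))
    (at_point (t (n - 1)%nat)) (at_left (t n)).

Definition gfun (x y alpha : R) : R :=
  (2 + 2 * (1 + alpha) * x - alpha * Rpower x (2 - alpha / 2)) / (1 + x)
  - alpha * Rpower y (2 - alpha / 2) / (1 + y).

Definition is_rstar (alpha z : R) : Prop :=
  0 < z /\ 1 / alpha + (1 + 1 / alpha) * z - Rpower z (2 - alpha / 2) = 0.
Definition rstar (alpha : R) : R := epsilon (inhabits 0) (is_rstar alpha).

Definition JB2 (alpha : R) (t : nat -> R) (v : nat -> R) (n : nat) : R :=
  (1 / (2 - alpha) * a0 alpha t n
     + ratio t n * eta0 alpha t n / (1 + ratio t n)) * nabla v n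
  - (ratio t n) ^ 2 * eta0 alpha t n / (1 + ratio t n) * nabla v (n - 1)%nat.

(* Main.v *)
Require Import Defs.
From Stdlib Require Import Reals Lra Psatz Classical Lia.
From Coquelicot Require Import Coquelicot.
Open Scope R_scope.

Lemma gen_ftc {Fa Fb : (R -> Prop) -> Prop} {FFa : Filter Fa} {FFb : Filter Fb}
  (f F : R -> R) (la lb : R) :
  filter_prod Fa Fb (fun ab => is_RInt f (fst ab) (snd ab) (F (snd ab) - F (fst ab))) ->
  filterlim F Fa (locally la) -> filterlim F Fb (locally lb) ->
  is_RInt_gen f Fa Fb (lb - la).
Proof.
  intros H Ha Hb. eapply filterlimi_lim_ext_loc. exact H.
  apply (filterlim_comp_2 (F:=filter_prod Fa Fb) (G:=locally lb) (H:=locally (opp la)) (fun ab => F (snd ab)) (fun ab => opp (F (fst ab)))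
     (fun x y => plus x y)).
  - apply (filterlim_comp _ _ _ snd F _ Fb); [apply filterlim_snd | exact Hb].
  - apply (filterlim_comp _ _ _ fst (fun a => opp (F a)) _ Fa); [apply filterlim_fst | ].
    apply (filterlim_comp _ _ _ F opp _ (locally la)); [exact Ha | apply (filterlim_opp (K:=R_AbsRing) (V:=R_NormedModule))].
  - apply (filterlim_plus (K:=R_AbsRing) lb (opp la)).
Qed.

Lemma is_derive_Rpower (x y : R) : 0 < x ->
  is_derive (fun x => Rpower x y) x (y * Rpower x (y - 1)).
Proof. intros Hx. apply is_derive_Reals. now apply derivable_pt_lim_power. Qed.

Lemma ex_derive_Rpower (x y : R) : 0 < x -> ex_derive (fun x => Rpower x y) x.
Proof. intros Hx. eexists. now apply is_derive_Rpower. Qed.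

Lemma Derive_Rpower (x y : R) : 0 < x -> Derive (fun x => Rpower x y) x = y * Rpower x (y - 1).
Proof. intros Hx. apply is_derive_unique. now apply is_derive_Rpower. Qed.

Lemma Rpower_S (x y : R) : 0 < x -> Rpower x (y + 1) = x * Rpower x y.
Proof. intros Hx. rewrite Rpower_plus, Rpower_1 by exact Hx. ring. Qed.

Lemma Rpower_pos (x y : R) : 0 < Rpower x y.
Proof. unfold Rpower. apply exp_pos. Qed.

Lemma Rpower_1l (y : R) : Rpower 1 y = 1.
Proof. unfold Rpower. rewrite ln_1, Rmult_0_r. apply exp_0. Qed.

Lemma Rpower_small (p eps : R) : 0 < p -> 0 < eps ->
  exists d, 0 < d /\ forall x, 0 < x < d -> Rpower x p < eps.
Proof.
  intros Hp He. exists (Rpower eps (/ p)). split. apply Rpower_pos.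
  intros x [Hx Hxd].
  apply Rlt_le_trans with (Rpower (Rpower eps (/p)) p).
  apply Rlt_Rpower_l; auto.
  rewrite Rpower_mult. replace (/p * p) with 1 by (field; lra). rewrite Rpower_1 by lra; lra.
Qed.

Lemma ballR (x y eps : R) : Rabs (y - x) < eps -> ball x eps y.
Proof. intros H. exact H. Qed.

Lemma mono_gen (f : R -> R) (M : R) :
  (forall x, 0 < x -> 0 <= f x) ->
  (forall a b, 0 < a -> 0 < b -> ex_RInt f a b) ->
  (forall a b, 0 < a -> a <= b -> RInt f a b <= M) ->
  exists L, is_RInt_gen f (at_right 0) (Rbar_locally p_infty) L /\
     forall a b, 0 < a -> a <= b -> RInt f a b <= L.
Proof.
  intros Hpos Hex Hb.
  set (E := fun y => exists a b, 0 < a /\ a <= b /\ y = RInt f a b).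
  destruct (completeness E) as [L [Hub Hlub]].
  { exists M. intros y (a & b & Ha & Hab & ->). auto. }
  { exists (RInt f 1 1), 1, 1. repeat split; lra. }
  exists L. split.
  2:{ intros a b Ha Hab. apply Hub. exists a, b. auto. }
  unfold is_RInt_gen.
  apply filterlimi_lim_ext_loc with (f := fun ab => RInt f (fst ab) (snd ab)).
  { apply Filter_prod with (fun a => 0 < a < 1) (fun b => 1 < b).
    - exists (mkposreal 1 Rlt_0_1). intros y Hy Hy0. split; auto.
      unfold ball in Hy; simpl in Hy; unfold AbsRing_ball, abs, minus, plus, opp in Hy; simpl in Hy.
      apply Rabs_lt_between in Hy. lra.
    - exists 1. auto.
    - intros a b Ha Hb'. simpl. apply (RInt_correct (V:=R_CompleteNormedModule)). apply Hex; lra. }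
  apply filterlim_locally. intros eps.
  assert (Hex2 : exists y, E y /\ L - eps < y).
  { apply NNPP. intros Hn.
    assert (L <= L - eps).
    { apply Hlub. intros y Hy. apply Rnot_lt_le. intros Hl. apply Hn. eauto. }
    destruct eps; simpl in *; lra. }
  destruct Hex2 as [y [(a0 & b0 & Ha0 & Hab0 & ->) Hy]].
  apply Filter_prod with (fun a => 0 < a < a0) (fun b => b0 < b).
  - exists (mkposreal a0 Ha0). intros y Hy' Hy0. split; auto.
    unfold ball in Hy'; simpl in Hy'; unfold AbsRing_ball, abs, minus, plus, opp in Hy'; simpl in Hy'.
    apply Rabs_lt_between in Hy'. lra.
  - exists b0. auto.
  - intros a b Ha Hb'. simpl. apply ballR.
    assert (Hc : RInt f a b = RInt f a a0 + RInt f a0 b0 + RInt f b0 b).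
    { rewrite <- (RInt_Chasles f a a0 b) by (apply Hex; lra).
      rewrite <- (RInt_Chasles f a0 b0 b) by (apply Hex; lra).
      unfold plus; simpl; ring. }
    assert (0 <= RInt f a a0).
    { apply RInt_ge_0. lra. apply Hex; lra. intros; apply Hpos; lra. }
    assert (0 <= RInt f b0 b).
    { apply RInt_ge_0. lra. apply Hex; lra. intros; apply Hpos; lra. }
    assert (RInt f a b <= L).
    { apply Hub. exists a, b. repeat split; lra. }
    apply Rabs_lt_between. destruct eps; simpl in *. lra.
Qed.

Lemma exp_bound1 (x : R) : 0 <= x -> exp (- x) * (1 + x) <= 1.
Proof.
  intros Hx. assert (H1 : 1 + x <= exp x).
  { destruct (Req_dec x 0) as [->|Hn]. rewrite exp_0; lra. left; apply exp_ineq1; lra. }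
  assert (H2 : exp (- x) * exp x = 1) by (rewrite <- exp_plus; replace (-x + x) with 0 by ring; apply exp_0).
  pose proof (exp_pos (-x)). nra.
Qed.

Lemma Rpower_le_1t (t p : R) : 0 < t -> 0 <= p <= 1 -> Rpower t p <= 1 + t.
Proof.
  intros Ht Hp. destruct (Rle_dec t 1) as [H|H].
  - apply Rle_trans with (Rpower 1 p). apply Rle_Rpower_l; lra. rewrite Rpower_1l; lra.
  - apply Rle_trans with (Rpower t 1). apply Rle_Rpower; lra. rewrite Rpower_1; lra.
Qed.

Ltac exd := repeat first [ exact I | split | apply ex_derive_Rpower; lra ].

Lemma cont_f (c x : R) : 0 < x -> continuous (fun t => Rpower t c * exp (- t)) x.
Proof.
  intros Hx. apply (ex_derive_continuous (K:=R_AbsRing) (V:=R_NormedModule)). auto_derive. exd.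
Qed.

Lemma exRInt_f (c a b : R) : 0 < a -> 0 < b -> ex_RInt (fun t => Rpower t c * exp (- t)) a b.
Proof.
  intros Ha Hb. apply (ex_RInt_continuous (V:=R_CompleteNormedModule)). intros z Hz. apply cont_f.
  apply Rlt_le_trans with (Rmin a b). apply Rmin_glb_lt; auto. apply Hz.
Qed.

Lemma gamma1 (alpha : R) : 0 < alpha < 1 ->
  exists L, is_RInt_gen (fun t => Rpower t (1 - alpha - 1) * exp (- t))
              (at_right 0) (Rbar_locally p_infty) L /\ 0 < L.
Proof.
  intros Ha.
  set (f1 := fun t => Rpower t (1 - alpha - 1) * exp (- t)).
  destruct (mono_gen f1 (4 / (1 - alpha))) as [L [HL HLb]].
  - intros x Hx. unfold f1. pose proof (Rpower_pos x (1-alpha-1)). pose proof (exp_pos (-x)). nra.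
  - intros a b Ha0 Hb0. apply exRInt_f; auto.
  - intros a b Ha0 Hab.
    set (K := fun t => (Rpower t (1 - alpha) * exp (- t) - (2 + t) * exp (- t)) / (1 - alpha)).
    set (k := fun t => f1 t + ((1 + t) - Rpower t (1 - alpha)) * exp (- t) / (1 - alpha)).
    assert (HK : is_RInt k a b (K b - K a)).
    { apply (is_RInt_derive K k).
      - intros x Hx. rewrite Rmin_left, Rmax_right in Hx by lra.
        unfold K, k, f1. auto_derive.
        + exd.
        + rewrite Derive_Rpower by lra. field. lra.
      - intros x Hx. rewrite Rmin_left, Rmax_right in Hx by lra.
        apply (ex_derive_continuous (K:=R_AbsRing) (V:=R_NormedModule)). unfold k, f1. auto_derive.
        exd. }
    apply Rle_trans with (RInt k a b).
    + apply RInt_le; auto.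
      * apply exRInt_f; lra.
      * eexists; exact HK.
      * intros x Hx. unfold k. pose proof (Rpower_le_1t x (1 - alpha) ltac:(lra) ltac:(lra)).
        pose proof (exp_pos (-x)).
        assert (0 <= ((1 + x) - Rpower x (1 - alpha)) * exp (- x) / (1 - alpha)).
        { apply Rmult_le_pos. apply Rmult_le_pos; lra. left; apply Rinv_0_lt_compat; lra. }
        lra.
    + rewrite (is_RInt_unique k a b _ HK).
      pose proof (Rpower_le_1t b (1 - alpha) ltac:(lra) ltac:(lra)).
      pose proof (exp_bound1 a ltac:(lra)). pose proof (exp_bound1 b ltac:(lra)).
      pose proof (exp_pos (-a)). pose proof (exp_pos (-b)).
      pose proof (Rpower_pos a (1 - alpha)).
      assert (HN : Rpower b (1 - alpha) * exp (- b) - (2 + b) * exp (- b)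
                 - (Rpower a (1 - alpha) * exp (- a) - (2 + a) * exp (- a)) <= 4) by nra.
      apply Rle_trans with ((Rpower b (1 - alpha) * exp (- b) - (2 + b) * exp (- b)
                 - (Rpower a (1 - alpha) * exp (- a) - (2 + a) * exp (- a))) / (1 - alpha)).
      { right. unfold K. field. lra. }
      unfold Rdiv. apply Rmult_le_compat_r. left; apply Rinv_0_lt_compat; lra. exact HN.
  - exists L. split. exact HL.
    apply Rlt_le_trans with (RInt f1 1 2); [| apply HLb; lra].
    apply RInt_gt_0. lra.
    + intros x Hx. unfold f1. pose proof (Rpower_pos x (1-alpha-1)). pose proof (exp_pos (-x)). nra.
    + intros x Hx. apply cont_f. lra.
Qed.
Lemma exp_cube (b : R) : 0 <= b -> b ^ 3 <= 27 * exp b.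
Proof.
  intros Hb. assert (exp b = exp (b/3) * exp (b/3) * exp (b/3)).
  { rewrite <- !exp_plus. f_equal. field. }
  assert (b/3 <= exp (b/3)).
  { destruct (Req_dec b 0) as [->|Hn]. unfold Rdiv; rewrite Rmult_0_l, exp_0; lra.
    left. apply Rlt_trans with (1 + b/3). lra. apply exp_ineq1. lra. }
  rewrite H. assert (0 <= b/3) by lra.
  replace (b^3) with (27 * ((b/3) * (b/3) * (b/3))) by field.
  apply Rmult_le_compat_l. lra.
  apply Rmult_le_compat. nra. lra. apply Rmult_le_compat; lra. lra.
Qed.

Lemma gamma3 (alpha L : R) : 0 < alpha < 1 ->
  is_RInt_gen (fun t => Rpower t (1 - alpha - 1) * exp (- t)) (at_right 0) (Rbar_locally p_infty) L ->
  is_RInt_gen (fun t => Rpower t (3 - alpha - 1) * exp (- t)) (at_right 0) (Rbar_locally p_infty)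
     ((1 - alpha) * (2 - alpha) * L).
Proof.
  intros Ha HL.
  set (H := fun t => Rpower t (2 - alpha) * exp (- t) + (2 - alpha) * (Rpower t (1 - alpha) * exp (- t))).
  assert (HH : forall t, 0 < t -> H t = exp (- t) * Rpower t (1 - alpha) * (t + 2 - alpha)).
  { intros t Ht. unfold H. replace (2 - alpha) with ((1 - alpha) + 1) at 1 by ring.
    rewrite Rpower_S by exact Ht. ring. }
  assert (Hg : is_RInt_gen (fun t => Rpower t (3 - alpha - 1) * exp (- t)
                 - (1 - alpha) * (2 - alpha) * (Rpower t (1 - alpha - 1) * exp (- t)))
                 (at_right 0) (Rbar_locally p_infty) (0 - 0)).
  { apply (gen_ftc _ (fun t => - H t)).
    - apply Filter_prod with (fun a => 0 < a) (fun b => 0 < b).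
      + exists (mkposreal 1 Rlt_0_1). intros y _ Hy. exact Hy.
      + exists 0. auto.
      + intros a b Ha0 Hb0. simpl.
        apply (is_RInt_derive (fun t => - H t)).
        * intros x Hx. assert (0 < x).
          { apply Rlt_le_trans with (Rmin a b). apply Rmin_glb_lt; auto. apply Hx. }
          unfold H. auto_derive. exd.
          rewrite !Derive_Rpower by lra.
          replace (2 - alpha - 1) with (1 - alpha) by ring.
          replace (3 - alpha - 1) with (2 - alpha) by ring. ring.
        * intros x Hx. assert (0 < x).
          { apply Rlt_le_trans with (Rmin a b). apply Rmin_glb_lt; auto. apply Hx. }
          apply (ex_derive_continuous (K:=R_AbsRing) (V:=R_NormedModule)). auto_derive. exd.
    - apply filterlim_locally. intros eps.
      destruct (Rpower_small (1 - alpha) (eps / 3)) as [d [Hd Hd']]. lra. destruct eps; simpl; lra.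
      exists (mkposreal (Rmin d 1) ltac:(apply Rmin_glb_lt; lra)).
      intros y Hy Hy0. simpl in Hy.
      unfold ball in Hy; simpl in Hy; unfold AbsRing_ball, abs, minus, plus, opp in Hy; simpl in Hy.
      apply Rabs_lt_between in Hy. pose proof (Rmin_l d 1). pose proof (Rmin_r d 1).
      assert (y < d) by lra. assert (y < 1) by lra.
      apply ballR. rewrite HH by exact Hy0.
      pose proof (Hd' y (conj Hy0 H2)). pose proof (Rpower_pos y (1 - alpha)).
      pose proof (exp_pos (- y)). pose proof (exp_bound1 y ltac:(lra)).
      assert (exp (- y) <= 1) by nra.
      assert (0 <= exp (- y) * Rpower y (1 - alpha)) by nra.
      assert (exp (- y) * Rpower y (1 - alpha) <= Rpower y (1 - alpha)) by nra.
      assert (exp (- y) * Rpower y (1 - alpha) * (y + 2 - alpha) <= 3 * Rpower y (1 - alpha)) by nra.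
      apply Rabs_lt_between. destruct eps; simpl in *. split; nra.
    - apply filterlim_locally. intros eps.
      exists (Rmax 1 (81 / eps)). intros y Hy.
      assert (1 < y) by (eapply Rle_lt_trans; [apply Rmax_l | exact Hy]).
      assert (Hy81 : 81 / eps < y) by (eapply Rle_lt_trans; [apply Rmax_r | exact Hy]).
      apply ballR. rewrite HH by lra.
      assert (Rpower y (1 - alpha) <= y).
      { apply Rle_trans with (Rpower y 1). apply Rle_Rpower; lra. rewrite Rpower_1; lra. }
      pose proof (Rpower_pos y (1 - alpha)). pose proof (exp_pos (- y)).
      pose proof (exp_cube y ltac:(lra)).
      assert (E1 : exp (- y) * exp y = 1).
      { rewrite <- exp_plus. replace (- y + y) with 0 by ring. apply exp_0. }
      assert (y ^ 3 * exp (- y) <= 27) by nra.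
      destruct eps as [e He]; simpl in *.
      assert (81 < e * y).
      { apply (Rmult_lt_compat_l e) in Hy81; [| lra].
        replace (e * (81 / e)) with 81 in Hy81 by (field; lra). exact Hy81. }
      assert (0 <= exp (- y) * Rpower y (1 - alpha) * (y + 2 - alpha)) by
        (apply Rmult_le_pos; [apply Rmult_le_pos|]; lra).
      assert (exp (- y) * Rpower y (1 - alpha) <= exp (- y) * y) by nra.
      assert (0 <= exp (- y) * Rpower y (1 - alpha)) by nra.
      assert (exp (- y) * Rpower y (1 - alpha) * (y + 2 - alpha) <= (exp (- y) * y) * (3 * y)).
      { apply Rmult_le_compat; lra. }
      assert (y * ((exp (- y) * y) * (3 * y)) <= 81).
      { replace (y * ((exp (- y) * y) * (3 * y))) with (3 * (y ^ 3 * exp (- y))) by ring. lra. }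
      assert (HQ : exp (- y) * Rpower y (1 - alpha) * (y + 2 - alpha) < e).
      { apply Rmult_lt_reg_l with y. lra. nra. }
      apply Rabs_lt_between. split; lra. }
  pose proof (is_RInt_gen_plus _ _ _ _ Hg (is_RInt_gen_scal _ ((1 - alpha) * (2 - alpha)) _ HL)) as Hs.
  replace ((1 - alpha) * (2 - alpha) * L) with (plus (0 - 0) (scal ((1 - alpha) * (2 - alpha)) L))
    by (unfold plus, scal; simpl; unfold mult; simpl; ring).
  eapply is_RInt_gen_ext; [| exact Hs].
  apply Filter_prod with (fun _ => True) (fun _ => True).
  - exists (mkposreal 1 Rlt_0_1). auto.
  - exists 0. auto.
  - intros a b _ _ x _. unfold plus, scal; simpl; unfold mult; simpl. ring.
Qed.

Lemma gamma_facts (alpha : R) : 0 < alpha < 1 ->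
  0 < Gamma (1 - alpha) /\ Gamma (3 - alpha) = (1 - alpha) * (2 - alpha) * Gamma (1 - alpha).
Proof.
  intros Ha. destruct (gamma1 alpha Ha) as [L [HL HLp]].
  pose proof (gamma3 alpha L Ha HL) as H3.
  unfold Gamma. rewrite (is_RInt_gen_unique _ _ HL), (is_RInt_gen_unique _ _ H3). auto.
Qed.

Lemma lim_left (c p : R) : 0 < p -> filterlim (fun s => Rpower (c - s) p) (at_left c) (locally 0).
Proof.
  intros Hp. apply filterlim_locally. intros eps.
  destruct (Rpower_small p eps Hp (cond_pos eps)) as [d [Hd Hd']].
  exists (mkposreal d Hd). intros y Hy Hyc. simpl in Hy.
  unfold ball in Hy; simpl in Hy; unfold AbsRing_ball, abs, minus, plus, opp in Hy; simpl in Hy.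
  apply Rabs_lt_between in Hy.
  apply ballR. pose proof (Hd' (c - y) ltac:(lra)). pose proof (Rpower_pos (c - y) p).
  apply Rabs_lt_between. lra.
Qed.

Lemma lim_lin2 {T} {F : (T -> Prop) -> Prop} {FF : Filter F} (g1 g2 : T -> R) (A B : R) :
  filterlim g1 F (locally 0) -> filterlim g2 F (locally 0) ->
  filterlim (fun s => A * g1 s + B * g2 s) F (locally 0).
Proof.
  intros H1 H2. apply filterlim_locally. intros eps.
  assert (Hk : 0 < eps / (2 * (Rabs A + Rabs B + 1))).
  { apply Rdiv_lt_0_compat. apply cond_pos. pose proof (Rabs_pos A). pose proof (Rabs_pos B). lra. }
  pose proof (proj1 (filterlim_locally g1 0) H1 (mkposreal _ Hk)) as E1.
  pose proof (proj1 (filterlim_locally g2 0) H2 (mkposreal _ Hk)) as E2.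
  generalize (filter_and _ _ E1 E2). apply filter_imp. intros x [B1 B2].
  unfold ball in B1, B2; simpl in B1, B2; unfold AbsRing_ball, abs, minus, plus, opp in B1, B2; simpl in B1, B2.
  apply ballR. rewrite Rminus_0_r. rewrite Ropp_0, Rplus_0_r in B1, B2.
  set (k := eps / (2 * (Rabs A + Rabs B + 1))) in *.
  assert (pos eps = k * (2 * (Rabs A + Rabs B + 1))) by (unfold k; field; pose proof (Rabs_pos A); pose proof (Rabs_pos B); lra).
  eapply Rle_lt_trans. apply Rabs_triang. rewrite !Rabs_mult.
  pose proof (Rabs_pos A). pose proof (Rabs_pos B). pose proof (Rabs_pos (g1 x)). pose proof (Rabs_pos (g2 x)).
  assert (Rabs A * Rabs (g1 x) <= Rabs A * k) by (apply Rmult_le_compat_l; lra).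
  assert (Rabs B * Rabs (g2 x) <= Rabs B * k) by (apply Rmult_le_compat_l; lra).
  nra.
Qed.

Lemma int_left (c0 c A B p q : R) (f : R -> R) : c0 < c -> 0 < p -> 0 < q ->
  (forall x, x < c -> is_derive (fun s => A * Rpower (c - s) p + B * Rpower (c - s) q) x (f x)) ->
  (forall x, x < c -> continuous f x) ->
  is_RInt_gen f (at_point c0) (at_left c) (0 - (A * Rpower (c - c0) p + B * Rpower (c - c0) q)).
Proof.
  intros Hc Hp Hq Hd Hcont.
  apply (gen_ftc f (fun s => A * Rpower (c - s) p + B * Rpower (c - s) q)).
  - apply Filter_prod with (fun a => a < c) (fun b => b < c).
    + exact Hc.
    + exists (mkposreal 1 Rlt_0_1). intros y _ Hy. exact Hy.
    + intros a b Ha Hb. simpl. apply (is_RInt_derive (fun s => A * Rpower (c - s) p + B * Rpower (c - s) q) f).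
      * intros x Hx. apply Hd. apply Rle_lt_trans with (Rmax a b). apply Hx. apply Rmax_lub_lt; auto.
      * intros x Hx. apply Hcont. apply Rle_lt_trans with (Rmax a b). apply Hx. apply Rmax_lub_lt; auto.
  - intros P HP. exact (locally_singleton _ P HP).
  - apply lim_lin2; apply lim_left; auto.
Qed.

Lemma a0_val (alpha : R) (t : nat -> R) (n : nat) : 0 < alpha < 1 -> 0 < tau t n ->
  a0 alpha t n = Rpower (tau t n) (1 - alpha) / (tau t n * (1 - alpha) * Gamma (1 - alpha)).
Proof.
  intros Ha Ht. destruct (gamma_facts alpha Ha) as [HC _].
  unfold tau in Ht.
  assert (HI := int_left (t (n - 1)%nat) (t n) (- / ((1 - alpha) * Gamma (1 - alpha))) 0 (1 - alpha) (1 - alpha)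
     (fun s => omega (1 - alpha) (t n - s)) ltac:(lra) ltac:(lra) ltac:(lra)).
  unfold a0. erewrite is_RInt_gen_unique; [ | apply HI ].
  - change (t n - t (n - 1)%nat) with (tau t n). unfold tau. field; repeat split; lra.
  - intros x Hx. unfold omega. auto_derive. exd.
    rewrite Derive_Rpower by lra. replace (t n + - x) with (t n - x) by ring. field; repeat split; lra.
  - intros x Hx. apply (ex_derive_continuous (K:=R_AbsRing) (V:=R_NormedModule)).
    unfold omega. auto_derive. exd.
Qed.

Lemma eta0_val (alpha : R) (t : nat -> R) (n : nat) : 0 < alpha < 1 -> 0 < tau t n ->
  eta0 alpha t n = 2 / tau t n * (0 - (- / (2 * (1 - alpha) * Gamma (1 - alpha)) * Rpower (tau t n) (1 - alpha)
       + / ((2 - alpha) * tau t n * Gamma (1 - alpha)) * Rpower (tau t n) (2 - alpha))).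
Proof.
  intros Ha Ht. destruct (gamma_facts alpha Ha) as [HC _].
  unfold tau in Ht.
  assert (HI := int_left (t (n - 1)%nat) (t n) (- / (2 * (1 - alpha) * Gamma (1 - alpha)))
     (/ ((2 - alpha) * tau t n * Gamma (1 - alpha))) (1 - alpha) (2 - alpha)
     (fun s => (s - (t n + t (n - 1)%nat) / 2) / tau t n * omega (1 - alpha) (t n - s))
     ltac:(lra) ltac:(lra) ltac:(lra)).
  unfold eta0. erewrite is_RInt_gen_unique; [ | apply HI ].
  - change (t n - t (n - 1)%nat) with (tau t n). reflexivity.
  - intros x Hx. unfold omega. auto_derive. exd.
    rewrite !Derive_Rpower by lra.
    replace (2 - alpha - 1) with ((1 - alpha - 1) + 1) by ring.
    rewrite (Rpower_S (t n - x)) by lra. replace (t n + - x) with (t n - x) by ring. unfold tau. field; repeat split; lra.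
  - intros x Hx. apply (ex_derive_continuous (K:=R_AbsRing) (V:=R_NormedModule)).
    unfold omega. auto_derive. exd.
Qed.

Lemma tau_pos (t : nat -> R) (k : nat) : (forall k : nat, t k < t (S k)) -> (1 <= k)%nat -> 0 < tau t k.
Proof.
  intros Hinc Hk. unfold tau. destruct k as [|m]; [lia|].
  replace (S m - 1)%nat with m by lia. specialize (Hinc m). lra.
Qed.

Theorem lemma2p2 (alpha : R) (t : nat -> R) (v : nat -> R) (n : nat) :
  0 < alpha < 1 ->
  t 0%nat = 0 ->
  (forall k : nat, t k < t (S k)) ->
  (forall k : nat, (2 <= k)%nat -> ratio t k < rstar alpha) ->
  (2 <= n)%nat ->
  nabla v n * JB2 alpha t v n >=
    alpha * Rpower (ratio t (S n)) (2 - alpha / 2)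
      / (2 * (1 + ratio t (S n)) * Rpower (tau t n) alpha)
      * (nabla v n) ^ 2 / Gamma (3 - alpha)
  - alpha * Rpower (ratio t n) (2 - alpha / 2)
      / (2 * (1 + ratio t n) * Rpower (tau t (n - 1)%nat) alpha)
      * (nabla v (n - 1)%nat) ^ 2 / Gamma (3 - alpha)
  + gfun (ratio t n) (ratio t (S n)) alpha
      / (2 * Gamma (3 - alpha) * Rpower (tau t n) alpha) * (nabla v n) ^ 2.
Proof.
  intros Ha Ht0 Hinc Hr Hn.
  destruct (gamma_facts alpha Ha) as [HC HG].
  assert (Htn : 0 < tau t n) by (apply tau_pos; auto; lia).
  assert (Htp : 0 < tau t (n - 1)%nat) by (apply tau_pos; auto; lia).
  assert (Hts : 0 < tau t (S n)) by (apply tau_pos; auto; lia).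
  assert (Hr0 : 0 < ratio t n) by (unfold ratio; apply Rdiv_lt_0_compat; auto).
  assert (Hrs : 0 < ratio t (S n)).
  { unfold ratio. replace (S n - 1)%nat with n by lia. apply Rdiv_lt_0_compat; auto. }
  unfold JB2. rewrite (a0_val alpha t n Ha Htn), (eta0_val alpha t n Ha Htn).
  unfold gfun.
  set (P := Rpower (tau t n) alpha).
  set (q := Rpower (ratio t n) (alpha / 4)).
  assert (HP : 0 < P) by apply Rpower_pos.
  assert (Hq : 0 < q) by apply Rpower_pos.
  assert (HW : Rpower (tau t n) (1 - alpha) = tau t n / P).
  { unfold Rminus. rewrite Rpower_plus, Rpower_1, Rpower_Ropp by lra. reflexivity. }
  assert (HW2 : Rpower (tau t n) (2 - alpha) = tau t n * (tau t n / P)).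
  { replace (2 - alpha) with ((1 - alpha) + 1) by ring. rewrite Rpower_S by lra. now rewrite HW. }
  assert (Hq4 : Rpower (ratio t n) alpha = q * q * q * q).
  { unfold q. rewrite <- !Rpower_plus. f_equal. field. }
  assert (HPp : Rpower (tau t (n - 1)%nat) alpha = P / (q * q * q * q)).
  { assert (E : Rpower (ratio t n) alpha * Rpower (tau t (n - 1)%nat) alpha = P).
    { rewrite Rpower_mult_distr by lra. unfold P. f_equal. unfold ratio. field. lra. }
    rewrite <- E, Hq4. field. lra. }
  assert (Hr2 : Rpower (ratio t n) (2 - alpha / 2) = ratio t n * ratio t n / (q * q)).
  { assert (E : Rpower (ratio t n) (2 - alpha / 2) * (q * q) = ratio t n * ratio t n).
    { unfold q. rewrite <- !Rpower_plus.
      replace (2 - alpha / 2 + (alpha / 4 + alpha / 4)) with (1 + 1) by field.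
      rewrite Rpower_plus, Rpower_1 by lra. reflexivity. }
    rewrite <- E. field. lra. }
  rewrite HW, HW2, HPp, Hr2, HG.
  set (x := nabla v n). set (y := nabla v (n - 1)%nat).
  set (r := ratio t n) in *. set (rs := ratio t (S n)) in *.
  set (Rs := Rpower rs (2 - alpha / 2)). set (C := Gamma (1 - alpha)) in *. set (tn := tau t n) in *.
  match goal with |- ?L >= ?R =>
    assert (D : L - R = alpha * r * r * (x - q * q * y) ^ 2 / (2 * (1 + r) * P * ((1 - alpha) * (2 - alpha) * C) * (q * q))) end.
  { field. repeat split; lra. }
  assert (0 <= alpha * r * r * (x - q * q * y) ^ 2 / (2 * (1 + r) * P * ((1 - alpha) * (2 - alpha) * C) * (q * q))).
  { apply Rmult_le_pos. apply Rmult_le_pos. apply Rmult_le_pos. nra. lra. apply pow2_ge_0.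
    left. apply Rinv_0_lt_compat. repeat apply Rmult_lt_0_compat; nra. }
  lra.
Qed.
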